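(* Let $d$ be an integer with $d \ge 2$ and let $\beta \in \mathbb{C} \setminus (\mathbb{R} \cup \{i, -i\})$. Let $h_\beta(x)=(\beta x+1)/(\beta+x)$, $g_\beta(x)=h_\beta(h_\beta(x))$, $f_\beta(x) = g_\beta(x^d)$ and $z = f_\beta'(1)/d$. If $0 < \lvert \beta -1 \rvert / \lvert \beta + 1 \rvert < 1$ and $\lvert \beta \rvert \ne 1$, then (1) $g_\beta'(1)\notin \{0, \infty\}$ and $g_\beta''(1) \ne \infty$; (2) $0 < \lvert z \rvert < 1$ and $z \notin \mathbb{R}$. *)

(* Defs.v *)
From Stdlib Require Import Reals.
From Coquelicot Require Export Coquelicot.
Open Scope R_scope.
Open Scope C_scope.

Definition h_beta (beta : C) (x : C) : C := (beta * x + 1) / (beta + x).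
Definition g_beta (beta : C) (x : C) : C := h_beta beta (h_beta beta x).
Definition f_beta (beta : C) (d : nat) (x : C) : C := g_beta beta (x ^ d).

(* Main.v *)
Require Import Defs.
From Stdlib Require Import Reals Lra Psatz Lia.
From Coquelicot Require Import Coquelicot.
Open Scope R_scope.
Open Scope C_scope.

Lemma tr1 (f : C -> C) x l :
  is_derive (V:=AbsRing_NormedModule C_AbsRing) f x l -> is_derive (V:=C_NormedModule) f x l.
Proof. unfold is_derive, filterdiff, is_domin. intros [[Hl1 Hl2 Hl3] Hd]. split. split.
- exact Hl1.
- exact Hl2.
- exact Hl3.
- exact Hd.
Qed.

Lemma tr2 (f : C -> C) x l :
  is_derive (V:=C_NormedModule) f x l -> is_derive (V:=AbsRing_NormedModule C_AbsRing) f x l.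
Proof. unfold is_derive, filterdiff, is_domin. intros [[Hl1 Hl2 Hl3] Hd]. split. split.
- exact Hl1.
- exact Hl2.
- exact Hl3.
- exact Hd.
Qed.

Lemma Cd_id (x : C) : is_derive (V:=C_NormedModule) (fun t : C => t) x (RtoC 1).
Proof. apply tr1. exact (is_derive_id (K:=C_AbsRing) x). Qed.

Lemma Cd_const (a x : C) : is_derive (V:=C_NormedModule) (fun _ : C => a) x (RtoC 0).
Proof. exact (is_derive_const (K:=C_AbsRing) (V:=C_NormedModule) a x). Qed.

Lemma Cd_plus (f g : C -> C) x df dg : is_derive (V:=C_NormedModule) f x df -> is_derive (V:=C_NormedModule) g x dg ->
  is_derive (V:=C_NormedModule) (fun t => f t + g t) x (df + dg).
Proof. intros Hf Hg. exact (is_derive_plus f g x df dg Hf Hg). Qed.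

Lemma Cd_comp (f g : C -> C) x df dg : is_derive (V:=C_NormedModule) f (g x) df -> is_derive (V:=C_NormedModule) g x dg ->
  is_derive (V:=C_NormedModule) (fun t => f (g t)) x (dg * df).
Proof. intros Hf Hg. exact (is_derive_comp f g x df dg Hf (tr2 _ _ _ Hg)). Qed.

Lemma Cd_mult (f g : C -> C) x df dg : is_derive (V:=C_NormedModule) f x df -> is_derive (V:=C_NormedModule) g x dg ->
  is_derive (V:=C_NormedModule) (fun t => f t * g t) x (df * g x + f x * dg).
Proof.
  intros Hf Hg. apply tr1. pose proof (tr2 f x df Hf) as Hf'. pose proof (tr2 g x dg Hg) as Hg'.
  pose proof (filterdiff_mult_fct (K:=C_AbsRing) (U:=AbsRing_NormedModule C_AbsRing) f g x _ _ Cmult_comm Hf' Hg') as H.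
  unfold is_derive.
  eapply filterdiff_ext_lin; [exact H|].
  intros y. simpl. change (y * df * g x + f x * (y * dg) = y * (df * g x + f x * dg)). ring.
Qed.
Lemma Cd_inv y0 : y0 <> RtoC 0 -> is_derive (V:=C_NormedModule) (fun t => / t) y0 (- / (y0*y0)).
Proof.
 intros Hy. split.
 - apply is_linear_scal_l.
 - intros x Hx. apply (is_filter_lim_locally_unique (K:=C_AbsRing) (V:=AbsRing_NormedModule C_AbsRing)) in Hx. subst x.
   intros eps. apply (locally_norm_le_locally (V:=AbsRing_NormedModule C_AbsRing)).
   assert (Hc : (0 < Cmod y0)%R) by (apply Cmod_gt_0; exact Hy).
   assert (Hd : (0 < Rmin (Cmod y0 / 2) (eps * Cmod y0 ^ 3 / 2))%R).
   { apply Rmin_pos; [lra|]. pose proof (cond_pos eps). apply Rmult_lt_0_compat; [|lra]. apply Rmult_lt_0_compat; auto. apply pow_lt; auto. }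
   exists (mkposreal _ Hd). intros y Hyb. change (Cmod (y - y0) < Rmin (Cmod y0 / 2) (eps * Cmod y0 ^ 3 / 2))%R in Hyb.
   change (Cmod (/ y - / y0 - (y - y0) * (- / (y0 * y0))) <= eps * Cmod (y - y0))%R.
   set (a := Cmod (y - y0)) in *.
   assert (Hb : (Cmod y0 - a <= Cmod y)%R).
   { unfold a. pose proof (Cmod_triangle y (y0 - y)). replace (y + (y0 - y)) with y0 in H by ring.
     replace (y0 - y) with (- (y - y0)) in H by ring. rewrite Cmod_opp in H. lra. }
   assert (Ha1 : (a < Cmod y0 / 2)%R) by (eapply Rlt_le_trans; [exact Hyb| apply Rmin_l]).
   assert (Ha2 : (a < eps * Cmod y0 ^ 3 / 2)%R) by (eapply Rlt_le_trans; [exact Hyb| apply Rmin_r]).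
   assert (Hyn : y <> RtoC 0).
   { intro E. rewrite E, Cmod_0 in Hb. lra. }
   replace (/ y - / y0 - (y - y0) * - / (y0 * y0)) with ((y - y0) * (y - y0) * / (y * (y0 * y0))) by (field; auto).
   rewrite Cmod_mult, Cmod_mult, Cmod_inv, Cmod_mult, Cmod_mult.
   2:{ repeat apply Cmult_neq_0; auto. }
   fold a. set (b := Cmod y) in *. set (c := Cmod y0) in *.
   assert (Ha0 : (0 <= a)%R) by apply Cmod_ge_0.
   pose proof (cond_pos eps).
   clearbody a b c. clear Hyb Hd.
   assert (Hbp : (0 < b)%R) by lra.
   assert (Hp : (0 < b * (c * c))%R) by (apply Rmult_lt_0_compat; [lra| apply Rmult_lt_0_compat; lra]).
   apply (Rmult_le_reg_r (b * (c * c))); [exact Hp|].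
   rewrite Rmult_assoc, Rinv_l by lra. rewrite Rmult_1_r.
   replace (c ^ 3)%R with (c * c * c)%R in Ha2 by ring.
   assert (Hcc : (0 < c * c)%R) by nra.
   assert (eps * c * c * c <= 2 * eps * b * (c * c))%R by nra.
   nra.
Qed.

Lemma Cd_eq (f : C -> C) x l l' : is_derive (V:=C_NormedModule) f x l -> l = l' -> is_derive (V:=C_NormedModule) f x l'.
Proof. intros H E; subst; exact H. Qed.

Definition hh (beta x : C) : C := (beta * x + 1) * / (beta + x).
Definition hd (beta y : C) : C := (beta * beta - 1) * / ((beta + y) * (beta + y)).

Lemma Cd_h beta x : beta + x <> RtoC 0 -> is_derive (V:=C_NormedModule) (hh beta) x (hd beta x).
Proof.
  intros Hx. unfold hh, hd.
  eapply Cd_eq.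
  - apply Cd_mult.
    + apply Cd_plus. apply Cd_mult. apply Cd_const. apply Cd_id. apply Cd_const.
    + apply (Cd_comp (fun t => / t) (fun t => beta + t)).
      * apply Cd_inv. exact Hx.
      * apply Cd_plus. apply Cd_const. apply Cd_id.
  - match goal with |- ?a = ?b => change (@eq C a b) end. cbv beta. field. exact Hx.
Qed.

Lemma Cd_pow1 n : is_derive (V:=C_NormedModule) (fun x => x ^ n) (RtoC 1) (RtoC (INR n)).
Proof.
  induction n as [|n IH].
  - simpl. apply Cd_const.
  - eapply Cd_eq.
    + apply (Cd_mult (fun x => x) (fun x => x ^ n)). apply Cd_id. exact IH.
    + match goal with |- ?a = ?b => change (@eq C a b) end. rewrite Cpow_1_l, S_INR, RtoC_plus. ring.
Qed.

Definition Dx (f : C -> C) x := exists l, is_derive (V:=C_NormedModule) f x l.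

Lemma D_const a x : Dx (fun _ => a) x. Proof. eexists; apply Cd_const. Qed.
Lemma D_id x : Dx (fun t => t) x. Proof. eexists; apply Cd_id. Qed.
Lemma D_plus f g x : Dx f x -> Dx g x -> Dx (fun t => f t + g t) x.
Proof. intros [a Ha] [b Hb]. eexists; apply Cd_plus; eauto. Qed.
Lemma D_mult f g x : Dx f x -> Dx g x -> Dx (fun t => f t * g t) x.
Proof. intros [a Ha] [b Hb]. eexists; apply Cd_mult; eauto. Qed.
Lemma D_comp f g x : Dx f (g x) -> Dx g x -> Dx (fun t => f (g t)) x.
Proof. intros [a Ha] [b Hb]. eexists; apply Cd_comp; eauto. Qed.
Lemma D_inv f x : Dx f x -> f x <> RtoC 0 -> Dx (fun t => / f t) x.
Proof. intros Hf Hn. apply (D_comp (fun t => / t) f). eexists; apply Cd_inv; auto. exact Hf. Qed.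

Lemma rev_tri a b : (Cmod a - Cmod (a - b) <= Cmod b)%R.
Proof. pose proof (Cmod_triangle b (a - b)). replace (b + (a - b)) with a in H by ring. lra. Qed.

Lemma w_form a b : b <> 0%R ->
  ((a, b) - RtoC 1) * / ((a, b) + RtoC 1) =
  (((a*a+b*b-1)/((a+1)*(a+1)+b*b))%R, (2*b/((a+1)*(a+1)+b*b))%R).
Proof.
  intros Hb.
  assert (HD : (0 < (a+1)*(a+1)+b*b)%R) by (pose proof (Rsqr_pos_lt b Hb); pose proof (Rle_0_sqr (a+1)); unfold Rsqr in *; lra).
  assert (Hn : (a, b) + RtoC 1 <> RtoC 0).
  { intro E. apply (f_equal snd) in E. simpl in E. lra. }
  set (v := (((a*a+b*b-1)/((a+1)*(a+1)+b*b))%R, (2*b/((a+1)*(a+1)+b*b))%R)).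
  assert (E : v * ((a, b) + RtoC 1) = (a, b) - RtoC 1).
  { unfold v. apply injective_projections; simpl; field; lra. }
  rewrite <- E. field. exact Hn.
Qed.

Lemma Im_w2 a b : b <> 0%R -> (a*a+b*b <> 1)%R ->
  Im ((((a, b) - RtoC 1) * / ((a, b) + RtoC 1)) * (((a, b) - RtoC 1) * / ((a, b) + RtoC 1))) <> 0%R.
Proof.
  intros Hb Hn. rewrite w_form by exact Hb.
  assert (HD : (0 < (a+1)*(a+1)+b*b)%R) by (pose proof (Rsqr_pos_lt b Hb); pose proof (Rle_0_sqr (a+1)); unfold Rsqr in *; lra).
  simpl. set (D := ((a+1)*(a+1)+b*b)%R) in *.
  intro E.
  assert (E2 : ((a*a+b*b-1) * (2*b) * (2 / (D*D)) = 0)%R).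
  { rewrite <- E. field. lra. }
  apply Rmult_integral in E2. destruct E2 as [E2|E2].
  - apply Rmult_integral in E2. destruct E2; lra.
  - assert (0 < 2 / (D*D))%R. { apply Rdiv_lt_0_compat; nra. } lra.
Qed.

Lemma Dhd beta y : beta + y <> RtoC 0 -> Dx (hd beta) y.
Proof.
  intros H. unfold hd. apply D_mult. apply D_const.
  apply D_inv. apply D_mult; apply D_plus; try apply D_const; apply D_id.
  apply Cmult_neq_0; exact H.
Qed.

Theorem lemma3p17 (d : nat) (beta : C) :
  (2 <= d)%nat ->
  Im beta <> 0%R ->
  beta <> (0%R, 1%R) -> beta <> (0%R, (-1)%R) ->
  (0 < Cmod (beta - 1) / Cmod (beta + 1) < 1)%R ->
  Cmod beta <> 1%R ->
  (* (1) g'(1) is finite and nonzero, and g''(1) is finite *)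
  ((exists l : C, is_derive (g_beta beta) (RtoC 1) l /\ l <> RtoC 0) /\
   (exists g' : C -> C,
      locally (RtoC 1) (fun x => is_derive (g_beta beta) x (g' x)) /\
      ex_derive g' (RtoC 1))) /\
  (* (2) z = f'(1)/d satisfies 0 < |z| < 1 and z is not real *)
  (exists fd1 : C, is_derive (f_beta beta d) (RtoC 1) fd1 /\
     let z := fd1 / RtoC (INR d) in
     (0 < Cmod z < 1)%R /\ Im z <> 0%R).
Proof.
  intros Hd Him Hi1 Hi2 Hq Hmod.
  assert (Hb1 : beta + RtoC 1 <> RtoC 0).
  { intro E. apply (f_equal Im) in E. simpl in E. apply Him. unfold Im. lra. }
  assert (Hh1 : hh beta (RtoC 1) = RtoC 1).
  { unfold hh. field. exact Hb1. }
  set (w := (beta - RtoC 1) * / (beta + RtoC 1)).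
  assert (Hw : hd beta (RtoC 1) = w).
  { unfold hd, w. field. exact Hb1. }
  assert (Hcw : Cmod w = (Cmod (beta - 1) / Cmod (beta + 1))%R).
  { unfold w. rewrite Cmod_mult, Cmod_inv by exact Hb1. reflexivity. }
  assert (Hg : forall x, beta + x <> RtoC 0 -> beta + hh beta x <> RtoC 0 ->
     is_derive (V:=C_NormedModule) (g_beta beta) x (hd beta x * hd beta (hh beta x))).
  { intros x H1 H2. exact (Cd_comp (hh beta) (hh beta) x _ _ (Cd_h _ _ H2) (Cd_h _ _ H1)). }
  assert (HG1 : is_derive (V:=C_NormedModule) (g_beta beta) (RtoC 1) (w * w)).
  { eapply Cd_eq. apply Hg. exact Hb1. rewrite Hh1. exact Hb1. rewrite Hh1, Hw. reflexivity. }
  assert (Hwpos : (0 < Cmod w)%R) by (rewrite Hcw; lra).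
  split; [split|].
  - exists (w * w). split. exact HG1.
    intro E. apply (f_equal Cmod) in E. rewrite Cmod_mult, Cmod_0 in E. nra.
  - exists (fun x => hd beta x * hd beta (hh beta x)). split.
    + apply (locally_le_locally_norm (V:=C_NormedModule)).
      set (m := Cmod (beta + RtoC 1)).
      assert (Hm : (0 < m)%R) by (apply Cmod_gt_0; exact Hb1).
      assert (Hbe : (0 <= Cmod beta)%R) by apply Cmod_ge_0.
      assert (Hr : (0 < Rmin m (m * m / (2 * Cmod beta + 1)))%R).
      { apply Rmin_pos; [lra|]. apply Rdiv_lt_0_compat; nra. }
      exists (mkposreal _ Hr). intros y Hy.
      change (Cmod (y - RtoC 1) < Rmin m (m * m / (2 * Cmod beta + 1)))%R in Hy.
      set (t := Cmod (y - RtoC 1)) in *.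
      assert (Ht0 : (0 <= t)%R) by apply Cmod_ge_0.
      assert (Ht1 : (t < m)%R) by (eapply Rlt_le_trans; [exact Hy|apply Rmin_l]).
      assert (Ht2 : (t < m * m / (2 * Cmod beta + 1))%R) by (eapply Rlt_le_trans; [exact Hy|apply Rmin_r]).
      assert (Hy1 : beta + y <> RtoC 0).
      { intro E. pose proof (rev_tri (beta + RtoC 1) (beta + y)) as T.
        replace (beta + RtoC 1 - (beta + y)) with (- (y - RtoC 1)) in T by ring.
        rewrite Cmod_opp, E, Cmod_0 in T. fold m t in T. lra. }
      apply Hg. exact Hy1.
      intro E.
      set (K := beta * (y - RtoC 1) + beta * (y - RtoC 1)).
      assert (EP : (beta + RtoC 1) * (beta + RtoC 1) + K = (beta + hh beta y) * (beta + y)).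
      { unfold K, hh. field. exact Hy1. }
      rewrite E, Cmult_0_l in EP.
      pose proof (rev_tri ((beta + RtoC 1) * (beta + RtoC 1)) ((beta + RtoC 1) * (beta + RtoC 1) + K)) as T.
      replace ((beta + RtoC 1) * (beta + RtoC 1) - ((beta + RtoC 1) * (beta + RtoC 1) + K)) with (- K) in T by ring.
      rewrite EP, Cmod_opp, Cmod_0, Cmod_mult in T. fold m in T.
      assert (HK : (Cmod K <= 2 * Cmod beta * t)%R).
      { unfold K. eapply Rle_trans. apply Cmod_triangle. rewrite Cmod_mult. fold t. lra. }
      assert (Hm2 : (t * (2 * Cmod beta + 1) < m * m)%R).
      { apply (Rmult_lt_compat_r (2 * Cmod beta + 1)) in Ht2; [|lra].
        unfold Rdiv in Ht2. rewrite Rmult_assoc, Rinv_l, Rmult_1_r in Ht2 by lra. exact Ht2. }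
      nra.
    + assert (HD : Dx (fun x => hd beta x * hd beta (hh beta x)) (RtoC 1)).
      { apply D_mult. apply Dhd. exact Hb1.
        apply (D_comp (hd beta) (hh beta)). rewrite Hh1. apply Dhd. exact Hb1.
        eexists. apply Cd_h. exact Hb1. }
      exact HD.
  - assert (H1d : RtoC 1 ^ d = RtoC 1) by apply Cpow_1_l.
    assert (HGd : is_derive (V:=C_NormedModule) (g_beta beta) (RtoC 1 ^ d) (w * w)).
    { rewrite H1d. exact HG1. }
    exists (RtoC (INR d) * (w * w)). split.
    + exact (Cd_comp (g_beta beta) (fun x => x ^ d) (RtoC 1) _ _ HGd (Cd_pow1 d)).
    + intro z.
      assert (HdR : RtoC (INR d) <> RtoC 0).
      { intro E. injection E as E. apply (not_0_INR d); [lia|exact E]. }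
      assert (Ez : z = w * w) by (unfold z; field; exact HdR).
      rewrite Ez. split.
      * rewrite Cmod_mult, Hcw. nra.
      * unfold w. destruct beta as [a b]. simpl in Him.
        apply Im_w2. exact Him.
        intro E. apply Hmod. unfold Cmod. simpl. rewrite !Rmult_1_r, E. apply sqrt_1.
Qed.
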